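(* Let $n\ge4$ be even and let $\mathcal{S}_n$ be the regular $n$-gon state space. Then every pair of compatible dichotomic measurements $\mathsf{M}^{(1)},\mathsf{M}^{(2)}$ on $\mathcal{S}_n$ satisfies $\bar P(\mathsf{M}^{(1)},\mathsf{M}^{(2)})\le\frac34$, and there is a compatible pair attaining $\frac34$.
   Context: The regular $n$-gon state space $\mathcal{S}_n\subset\mathbb{R}^3$ is the convex hull of $s_j=(r_n\cos(2j\pi/n),\,r_n\sin(2j\pi/n),\,1)^T$, $j=1,\ldots,n$, with $r_n=\sqrt{\sec(\pi/n)}$. Effects are linear functionals $e$ on $\mathbb{R}^3$ with $0\le e\le1$ on $\mathcal{S}_n$; unit effect $u=(0,0,1)$; $\|f\|=\max_{s\in\mathcal{S}_n}|f(s)|$. A dichotomic measurement is a pair of effects $\mathsf{M}_+,\mathsf{M}_-$ with $\mathsf{M}_++\mathsf{M}_-=u$. Two dichotomic measurements are compatible if there exist effects $\mathsf{J}_{x,y}$, $x,y\in\{+,-\}$, summing to $u$ with $\sum_y\mathsf{J}_{x,y}=\mathsf{M}^{(1)}_x$ and $\sum_x\mathsf{J}_{x,y}=\mathsf{M}^{(2)}_y$. $\bar P(\mathsf{M}^{(1)},\mathsf{M}^{(2)})=\frac18\sum_{x,y\in\{+,-\}}\|\mathsf{M}^{(1)}_x+\mathsf{M}^{(2)}_y\|$. *)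

(* Defs.v *)
From HB Require Import structures.
From mathcomp Require Import all_boot all_order all_algebra.
From mathcomp Require Import classical_sets reals trigo.
Set Implicit Arguments. Unset Strict Implicit. Unset Printing Implicit Defensive.
Import Order.TTheory GRing.Theory Num.Theory.
Local Open Scope classical_set_scope.
Local Open Scope ring_scope.

(* vectors of R^3 are row vectors 'rV[R]_3 (coordinates 0,1,2);
   a linear functional on R^3 is represented by its coefficient row vector *)
Definition evalf {R : realType} (f s : 'rV[R]_3) : R := \sum_(i < 3) f 0 i * s 0 i.

Definition rn {R : realType} (n : nat) : R := Num.sqrt ((cos (pi / n%:R))^-1).

Definition vert {R : realType} (n j : nat) : 'rV[R]_3 :=
  \row_(i < 3) (if (i : nat) == 0%N then rn n * cos (2 * j%:R * pi / n%:R)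
                else if (i : nat) == 1%N then rn n * sin (2 * j%:R * pi / n%:R)
                else 1).

Definition stateSpace {R : realType} (n : nat) : set 'rV[R]_3 :=
  [set s | exists lam : 'I_n -> R, (forall j, 0 <= lam j) /\
           \sum_(j < n) lam j = 1 /\ s = \sum_(j < n) lam j *: vert n (j.+1)].

Definition unitE {R : realType} : 'rV[R]_3 :=
  \row_(i < 3) (if (i : nat) == 2%N then 1 else 0).

Definition is_effect {R : realType} (n : nat) (e : 'rV[R]_3) : Prop :=
  forall s, stateSpace n s -> 0 <= evalf e s <= 1.

(* ||f|| = max_{s in S_n} |f(s)| (the max exists; taken as the supremum) *)
Definition fnorm {R : realType} (n : nat) (f : 'rV[R]_3) : R :=
  sup [set `|evalf f s| | s in stateSpace n].

(* a dichotomic measurement: M true = M_+, M false = M_- *)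
Definition dichotomic {R : realType} (n : nat) (M : bool -> 'rV[R]_3) : Prop :=
  is_effect n (M true) /\ is_effect n (M false) /\ M true + M false = unitE.

Definition compatible {R : realType} (n : nat) (M1 M2 : bool -> 'rV[R]_3) : Prop :=
  exists J : bool -> bool -> 'rV[R]_3,
    (forall x y, is_effect n (J x y)) /\
    \sum_(x : bool) \sum_(y : bool) J x y = unitE /\
    (forall x, \sum_(y : bool) J x y = M1 x) /\
    (forall y, \sum_(x : bool) J x y = M2 y).

Definition Pbar {R : realType} (n : nat) (M1 M2 : bool -> 'rV[R]_3) : R :=
  8^-1 * \sum_(x : bool) \sum_(y : bool) fnorm n (M1 x + M2 y).

(* Main.v *)
Require Import Defs.
From HB Require Import structures.
From mathcomp Require Import all_boot all_order all_algebra.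
From mathcomp Require Import classical_sets reals trigo.
From mathcomp Require Import ring lra zify.
Import Order.TTheory GRing.Theory Num.Theory.
Local Open Scope ring_scope.
Local Open Scope classical_set_scope.
Section S.
Variable R : realType.

Definition i0 : 'I_3 := @Ordinal 3 0 isT.
Definition i1 : 'I_3 := @Ordinal 3 1 isT.
Definition i2 : 'I_3 := @Ordinal 3 2 isT.
Lemma evalf3 (f s : 'rV[R]_3) : evalf f s = f 0 i0 * s 0 i0 + f 0 i1 * s 0 i1 + f 0 i2 * s 0 i2.
Proof. rewrite /evalf !big_ord_recr big_ord0 /= add0r. by congr (_ * _ + _ * _ + _ * _); congr (_ _ _); apply: val_inj. Qed.

Lemma evalfDl (f g s : 'rV[R]_3) : evalf (f + g) s = evalf f s + evalf g s.
Proof. by rewrite /evalf -big_split; apply: eq_bigr => i _; rewrite mxE mulrDl. Qed.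
Lemma evalfNl (f s : 'rV[R]_3) : evalf (- f) s = - evalf f s.
Proof. by rewrite /evalf -sumrN; apply: eq_bigr => i _; rewrite mxE mulNr. Qed.
Lemma evalfZl a (f s : 'rV[R]_3) : evalf (a *: f) s = a * evalf f s.
Proof. by rewrite /evalf mulr_sumr; apply: eq_bigr => i _; rewrite mxE mulrA. Qed.
Lemma evalfDr (f s t : 'rV[R]_3) : evalf f (s + t) = evalf f s + evalf f t.
Proof. by rewrite /evalf -big_split; apply: eq_bigr => i _; rewrite mxE mulrDr. Qed.
Lemma evalfZr a (f s : 'rV[R]_3) : evalf f (a *: s) = a * evalf f s.
Proof. by rewrite /evalf mulr_sumr; apply: eq_bigr => i _; rewrite mxE mulrCA. Qed.
Lemma evalf_sumr m (f : 'rV[R]_3) (v : 'I_m -> 'rV[R]_3) :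
  evalf f (\sum_(j < m) v j) = \sum_(j < m) evalf f (v j).
Proof.
elim/big_ind2: _ => //; last by move=> *; rewrite evalfDr; congr (_ + _).
by rewrite /evalf big1 // => i _; rewrite mxE mulr0.
Qed.
Lemma evalf_suml (I : finType) (f : I -> 'rV[R]_3) s :
  evalf (\sum_(i : I) f i) s = \sum_(i : I) evalf (f i) s.
Proof.
elim/big_ind2: _ => //; last by move=> *; rewrite evalfDl; congr (_ + _).
by rewrite /evalf big1 // => i _; rewrite mxE mul0r.
Qed.
Lemma unit_vert n k : evalf (@Defs.unitE R) (vert n k) = 1.
Proof. by rewrite evalf3 !mxE /= !mul0r !add0r mulr1. Qed.

Lemma evalf_S n f s : stateSpace n s ->
  exists lam : 'I_n -> R, (forall j, 0 <= lam j) /\ \sum_(j < n) lam j = 1 /\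
   evalf f s = \sum_(j < n) lam j * evalf f (vert n j.+1).
Proof.
move=> [lam [h0 [h1 ->]]]; exists lam; split => //; split => //.
by rewrite evalf_sumr; apply: eq_bigr => j _; rewrite evalfZr.
Qed.

Lemma unit_S n s : stateSpace n s -> evalf (@Defs.unitE R) s = 1.
Proof.
move=> /(evalf_S _ (@Defs.unitE R)) [lam [_ [h1 ->]]].
by rewrite -h1; apply: eq_bigr => j _; rewrite unit_vert mulr1.
Qed.

Lemma vert_in n (k : 'I_n) : stateSpace n (@vert R n k.+1).
Proof.
exists (fun j => if j == k then 1 else 0); split; first by move=> j; case: ifP.
split.
  by rewrite (bigD1 k) //= eqxx big1 ?addr0 // => i /negbTE ->.
by rewrite (bigD1 k) //= eqxx big1 ?addr0 ?scale1r // => i /negbTE ->; rewrite scale0r.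
Qed.
Lemma vert_pi n (a b : nat) : (0 < n)%N -> ~~ odd n ->
  (2 * (a%:R : R) * pi / n%:R = 2 * b%:R * pi / n%:R + pi \/
   2 * (a%:R : R) * pi / n%:R = 2 * b%:R * pi / n%:R - pi) ->
  @vert R n b + vert n a = 2 *: Defs.unitE.
Proof.
move=> n0 _ h; apply/rowP => i; rewrite !mxE.
have Hc : cos (2 * (a%:R : R) * pi / n%:R) = - cos (2 * b%:R * pi / n%:R).
  by case: (h) => ->; [rewrite cosD | rewrite cosB]; rewrite cospi sinpi; ring.
have Hs : sin (2 * (a%:R : R) * pi / n%:R) = - sin (2 * b%:R * pi / n%:R).
  by case: (h) => ->; [rewrite sinD | rewrite sinB]; rewrite cospi sinpi; ring.
case: i => [[|[|[|//]]] Hi] /=.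
- by rewrite Hc; ring.
- by rewrite Hs; ring.
- by rewrite mulr1.
Qed.

Lemma antipode n (j : 'I_n) : ~~ odd n ->
  exists k : 'I_n, @vert R n j.+1 + vert n k.+1 = 2 *: Defs.unitE.
Proof.
move=> ev.
have n0 : (0 < n)%N by case: j => j /=; case: n {ev} => //.
have hn : n = (n./2 + n./2)%N by rewrite -{1}(odd_double_half n) (negbTE ev) add0n addnn.
have hnR : (n%:R : R) = 2 * (n./2)%:R by rewrite {1}hn natrD; ring.
have hn2 : ((n./2)%:R : R) != 0.
  by rewrite pnatr_eq0; apply/negP => /eqP h0; move: n0; rewrite hn h0.
have hnn : (n%:R : R) != 0 by rewrite pnatr_eq0 -lt0n.
case: (ltnP (j + n./2) n) => hj.
- exists (Ordinal hj); apply: vert_pi => //; left.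
  rewrite /= -addSn natrD hnR; field; exact: hn2.
- have hk : (j - n./2 < n)%N by rewrite (leq_ltn_trans (leq_subr _ _)).
  have hj' : (n./2 <= j)%N by rewrite -(leq_add2r n./2) -hn.
  exists (Ordinal hk); apply: vert_pi => //; right.
  have -> : ((Ordinal hk).+1 = j.+1 - n./2)%N by rewrite /= subSn.
  rewrite natrB; last by apply: leqW.
  rewrite hnR; field; exact: hn2.
Qed.
Lemma key n e s : is_effect n e -> ~~ odd n -> stateSpace n s ->
  evalf e s <= 2 * evalf e (@Defs.unitE R).
Proof.
move=> He ev /(evalf_S _ e) [lam [l0 [l1 ->]]].
apply: (@le_trans _ _ (\sum_(j < n) lam j * (2 * evalf e Defs.unitE))).
  apply: ler_sum => j _; apply: ler_wpM2l => //.
  have [k hk] := antipode _ j ev.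
  have := evalfDr e (vert n j.+1) (vert n k.+1).
  rewrite hk evalfZr => h.
  have := He _ (vert_in _ k) => /andP [h0 _]; lra.
by rewrite -mulr_suml l1 mul1r.
Qed.

Lemma fnorm_le n f b : (0 < n)%N ->
  (forall s, stateSpace n s -> `|evalf f s| <= b) -> @fnorm R n f <= b.
Proof.
move=> n0 h; apply: ge_sup.
  by exists `|evalf f (vert n (Ordinal n0).+1)|; exists (vert n (Ordinal n0).+1) => //; apply: vert_in.
by move=> x [s Ss <-]; apply: h.
Qed.

Lemma fnorm_eq n f b s0 : (0 < n)%N ->
  (forall s, stateSpace n s -> `|evalf f s| <= b) -> stateSpace n s0 ->
  `|evalf f s0| = b -> @fnorm R n f = b.
Proof.
move=> n0 h S0 e0; apply/le_anti/andP; split; first exact: fnorm_le.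
rewrite -e0; apply: ub_le_sup; last by exists s0.
by exists b => x [s Ss <-]; apply: h.
Qed.

Lemma effect_of_vert n f : (forall k : 'I_n, 0 <= evalf f (@vert R n k.+1) <= 1) ->
  is_effect n f.
Proof.
move=> h s /(evalf_S _ f) [lam [l0 [l1 ->]]]; apply/andP; split.
  by apply: sumr_ge0 => j _; apply: mulr_ge0 => //; case/andP: (h j).
rewrite -l1; apply: ler_sum => j _; rewrite -{2}(mulr1 (lam j)); apply: ler_wpM2l => //.
by case/andP: (h j).
Qed.
Lemma upper n (M1 M2 : bool -> 'rV[R]_3) : (4 <= n)%N -> ~~ odd n ->
  compatible n M1 M2 -> Pbar n M1 M2 <= 3 / 4.
Proof.
move=> n4 ev [J [HJe [HJs [HM1 HM2]]]].
have n0 : (0 < n)%N by apply: leq_trans n4.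
have decomp x y : M1 x + M2 y = Defs.unitE + J x y - J (~~x) (~~y).
  rewrite -HJs -HM1 -HM2 !big_bool; case: x; case: y => /=; apply/rowP => i; rewrite !mxE; ring.
have bnd x y : fnorm n (M1 x + M2 y) <= 1 + 2 * evalf (J x y) Defs.unitE.
  apply: fnorm_le => // s Ss.
  rewrite decomp evalfDl evalfDl evalfNl (unit_S _ _ Ss).
  have := key _ _ _ (HJe x y) ev Ss.
  have /andP [a0 a1] := HJe x y s Ss.
  have /andP [b0 b1] := HJe (~~x) (~~y) s Ss.
  move=> hk; rewrite ler_norml; apply/andP; split; lra.
have hs : evalf (J true true) Defs.unitE + evalf (J true false) Defs.unitE +
   (evalf (J false true) Defs.unitE + evalf (J false false) Defs.unitE) = 1 :> R.
  have h1 : evalf (@Defs.unitE R) Defs.unitE = 1 by rewrite evalf3 !mxE /=; ring.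
  by have := congr1 (fun f => evalf f Defs.unitE) HJs; rewrite /= !big_bool !evalfDl h1.
have := bnd true true; have := bnd true false; have := bnd false true; have := bnd false false.
rewrite /Pbar !big_bool /=. lra.
Qed.
Lemma rn_gt0 n : (4 <= n)%N -> 0 < @rn R n.
Proof.
move=> n4; rewrite /rn sqrtr_gt0 invr_gt0; apply: cos_gt0_pihalf.
have n0 : (0 < (n%:R : R)) by rewrite ltr0n; apply: leq_trans n4.
have n4R : (4 <= (n%:R : R)) by rewrite (ler_nat R 4 n).
have p0 := pi_gt0 R.
apply/andP; split.
  apply: (@lt_le_trans _ _ 0); first lra.
  by apply: divr_ge0; lra.
rewrite ltr_pdivrMr // .
have : 0 <= pi * (n%:R - 4 : R) by apply: mulr_ge0; lra.
lra.
Qed.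

Definition eff n : 'rV[R]_3 :=
  \row_(i < 3) (if (i : nat) == 0%N then (2 * rn n)^-1 else if (i : nat) == 1%N then 0 else 2^-1).

Lemma eff_vert n k : (4 <= n)%N ->
  evalf (eff n) (vert n k) = (1 + cos (2 * k%:R * pi / n%:R)) / 2.
Proof.
move=> n4; have r0 := rn_gt0 _ n4.
rewrite evalf3 !mxE /=; field; rewrite gt_eqF //.
Qed.
Lemma vert_in' n k : (0 < k <= n)%N -> stateSpace n (@vert R n k).
Proof.
case/andP=> k0 kn; have hk : (k.-1 < n)%N by rewrite prednK.
by have := vert_in _ (Ordinal hk); rewrite /= prednK.
Qed.

Lemma eff_sum2 n a b s : is_effect n a -> is_effect n b -> stateSpace n s ->
  `|evalf (a + b) s| <= 2 :> R.
Proof.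
move=> Ha Hb Ss; rewrite evalfDl.
have /andP [a0 a1] := Ha s Ss; have /andP [b0 b1] := Hb s Ss.
rewrite ler_norml; apply/andP; split; lra.
Qed.

Lemma exist_part n : (4 <= n)%N -> ~~ odd n ->
  (exists M1 M2 : bool -> 'rV[R]_3,
      dichotomic n M1 /\ dichotomic n M2 /\ compatible n M1 M2 /\
      Pbar n M1 M2 = 3 / 4).
Proof.
move=> n4 ev.
have n0 : (0 < n)%N by apply: leq_trans n4.
have hn : n = (n./2 + n./2)%N by rewrite -{1}(odd_double_half n) (negbTE ev) add0n addnn.
have hnR : (n%:R : R) = 2 * (n./2)%:R by rewrite {1}hn natrD; ring.
have hn2 : ((n./2)%:R : R) != 0.
  by rewrite pnatr_eq0; apply/negP => /eqP h0; move: n0; rewrite hn h0.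
have hnn : (n%:R : R) != 0 by rewrite pnatr_eq0 -lt0n.
set e := eff n; set u := (@Defs.unitE R).
have He : is_effect n e.
  apply: effect_of_vert => k; rewrite eff_vert //.
  have := cos_geN1 (2 * (k.+1)%:R * pi / (n%:R : R)).
  have := cos_le1 (2 * (k.+1)%:R * pi / (n%:R : R)).
  move=> h1 h2; apply/andP; split; lra.
have Hue : is_effect n (u - e).
  apply: effect_of_vert => k; rewrite evalfDl evalfNl unit_vert eff_vert //.
  have := cos_geN1 (2 * (k.+1)%:R * pi / (n%:R : R)).
  have := cos_le1 (2 * (k.+1)%:R * pi / (n%:R : R)).
  move=> h1 h2; apply/andP; split; lra.
have H0 : is_effect n (0 : 'rV[R]_3).
  by move=> s _; rewrite evalf3 !mxE !mul0r !addr0 lexx ler01.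
pose M := fun b : bool => if b then e else u - e.
pose J := fun x y : bool => if x then (if y then e else 0) else (if y then 0 else u - e).
have HM : dichotomic n M.
  split; first exact: He; split; first exact: Hue.
  by rewrite /M; apply/rowP => i; rewrite !mxE; ring.
exists M, M; split; first exact: HM; split; first exact: HM; split.
  exists J; split; first by case; case.
  split; first by rewrite !big_bool /J /=; apply/rowP => i; rewrite !mxE; ring.
  by split; case; rewrite !big_bool /J /M /=; apply/rowP => i; rewrite !mxE; ring.
have f1 : fnorm n (e + (u - e)) = 1.
  have -> : e + (u - e) = u by apply/rowP => i; rewrite !mxE; ring.
  apply: (@fnorm_eq _ _ _ (vert n n)) => //.
  - by move=> s Ss; rewrite (unit_S _ _ Ss) normr1.
  - by apply: vert_in'; rewrite n0 leqnn.
  - by rewrite unit_vert normr1.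
have f1' : fnorm n ((u - e) + e) = 1 by rewrite addrC.
have f2 : fnorm n (e + e) = 2.
  apply: (@fnorm_eq _ _ _ (vert n n)) => //.
  - by move=> s Ss; apply: (eff_sum2 _ _ _ _ He He Ss).
  - by apply: vert_in'; rewrite n0 leqnn.
  - rewrite evalfDl eff_vert //.
    have -> : 2 * (n%:R : R) * pi / n%:R = pi *+ 2 by rewrite mulr2n; field.
    rewrite cos2pi ger0_norm; lra.
have f3 : fnorm n ((u - e) + (u - e)) = 2.
  apply: (@fnorm_eq _ _ _ (vert n n./2)) => //.
  - by move=> s Ss; apply: (eff_sum2 _ _ _ _ Hue Hue Ss).
  - by apply: vert_in'; apply/andP; split; lia.
  - rewrite evalfDl evalfDl evalfNl unit_vert eff_vert //.
    have -> : 2 * ((n./2)%:R : R) * pi / n%:R = pi by rewrite hnR; field.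
    rewrite cospi ger0_norm; lra.
rewrite /Pbar !big_bool /M /= f1 f1' f2 f3; lra.
Qed.
End S.

Theorem mainTheorem12 (R : realType) (n : nat) :
  (4 <= n)%N -> ~~ odd n ->
  (forall M1 M2 : bool -> 'rV[R]_3,
      dichotomic n M1 -> dichotomic n M2 -> compatible n M1 M2 ->
      Pbar n M1 M2 <= 3 / 4) /\
  (exists M1 M2 : bool -> 'rV[R]_3,
      dichotomic n M1 /\ dichotomic n M2 /\ compatible n M1 M2 /\
      Pbar n M1 M2 = 3 / 4).
Proof.
move=> n4 ev; split; last exact: exist_part.
by move=> M1 M2 _ _ C; apply: upper.
Qed.
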